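(* Let $p$ be a prime, $e\ge1$, $q=p^e$, $0\le\ell\le e-1$, $m\ge n$, and let $\varphi_1,\dots,\varphi_m\in\mathbb{F}_q^n$ span $\mathbb{F}_q^n$. Let $\Phi$ be the $n\times m$ matrix with columns $\varphi_1,\dots,\varphi_m$, and for an integer $k\ge0$ let $\Phi^{\dagger_k}=\sigma_k(\Phi)^t$. Let $c\in\mathbb{F}_q$. Then the following are equivalent: (1) $\Phi\Phi^{\dagger_\ell}=cI_n$ (i.e. $\{\varphi_i\}$ is an $\ell$-Galois $c$-tight frame); (2) $G^2=cG$, where $G=\Phi^{\dagger_\ell}\Phi=\big((\varphi_i,\varphi_j)_\ell\big)_{i,j\in[m]}$ is the $\ell$-Galois Gram matrix; (3) $(\Phi^{\dagger_{e-\ell}}\mathbf{x},\Phi^{\dagger_\ell}\mathbf{y})_\ell=c(\mathbf{x},\mathbf{y})_\ell$ for all $\mathbf{x},\mathbf{y}\in\mathbb{F}_q^n$.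
   Context: For an integer $k\ge0$, $\sigma_k(c)=c^{p^k}$ for $c\in\mathbb{F}_q$, applied entrywise to matrices, and for vectors $\mathbf{x},\mathbf{y}$ of the same length $N$, $(\mathbf{x},\mathbf{y})_\ell=\sum_{i=1}^N x_i^{p^\ell}y_i$. $[m]=\{1,\dots,m\}$. *)

(* Defs.v *)
From HB Require Import structures.
From mathcomp Require Import all_boot all_order all_algebra all_field.
Set Implicit Arguments. Unset Strict Implicit. Unset Printing Implicit Defensive.
Import GRing.Theory.
Local Open Scope ring_scope.

Definition sigma (F : nzRingType) (p k : nat) (c : F) : F := c ^+ (p ^ k)%N.

Definition gdagger (F : nzRingType) (p k : nat) (r s : nat) (A : 'M[F]_(r, s))
  : 'M[F]_(s, r) := (map_mx (sigma p k) A)^T.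

Definition ginner (F : nzRingType) (p l N : nat) (x y : 'cV[F]_N) : F :=
  \sum_(i < N) sigma p l (x i 0) * y i 0.

(* Submission.v *)
Require Import Defs.
From HB Require Import structures.
From mathcomp Require Import all_boot all_order all_algebra all_field.
Set Implicit Arguments. Unset Strict Implicit. Unset Printing Implicit Defensive.
Import GRing.Theory.
Local Open Scope ring_scope.

Section Sig.
Variables (F : finFieldType) (p k : nat) (Hp : prime p) (Hchar : p \in [pchar F]).

Definition sig (x : F) : F := sigma p k x.

Lemma sig_nat : ([pchar F]).-nat (p ^ k)%N.
Proof. by rewrite pnatX (pnatE _ Hp) Hchar. Qed.

Lemma sig_nmod : nmod_morphism sig.
Proof.
split; first by rewrite /sig /sigma expr0n expn_eq0 (gtn_eqF (prime_gt0 Hp)).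
by move=> x y; rewrite /sig /sigma exprDn_pchar // sig_nat.
Qed.

Lemma sig_monoid : monoid_morphism sig.
Proof. by split; [rewrite /sig /sigma expr1n | move=> x y; rewrite /sig /sigma exprMn]. Qed.

HB.instance Definition _ := GRing.isNmodMorphism.Build F F sig sig_nmod.
HB.instance Definition _ := GRing.isMonoidMorphism.Build F F sig sig_monoid.
End Sig.

Lemma gdaggerE (F : finFieldType) p k r s (A : 'M[F]_(r, s)) :
  gdagger p k A = (map_mx (@sig F p k) A)^T.
Proof. by []. Qed.

Lemma ginnerE (F : finFieldType) p k N (x y : 'cV[F]_N) :
  ginner p k x y = ((map_mx (@sig F p k) x)^T *m y) 0 0.
Proof. by rewrite /ginner mxE; apply: eq_bigr => i _; rewrite !mxE. Qed.

Lemma sigM (F : finFieldType) p k (Hp : prime p) (Hchar : p \in [pchar F]) a b c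
  (A : 'M[F]_(a, b)) (B : 'M[F]_(b, c)) :
  map_mx (@sig F p k) (A *m B) = map_mx (@sig F p k) A *m map_mx (@sig F p k) B.
Proof. exact: (map_mxM (Submission_sig__canonical__GRing_RMorphism k Hp Hchar)). Qed.

Lemma mapT (F : finFieldType) (f : F -> F) a b (A : 'M[F]_(a, b)) :
  map_mx f A^T = (map_mx f A)^T.
Proof. by apply/matrixP => i j; rewrite !mxE. Qed.

Unset Implicit Arguments.
Theorem mainTheorem3 (p e l n m : nat) (F : finFieldType)
  (Hp : prime p) (He : (1 <= e)%N) (Hchar : p \in [pchar F])
  (Hcard : #|F| = (p ^ e)%N) (Hl : (l <= e - 1)%N) (Hmn : (n <= m)%N)
  (Phi : 'M[F]_(n, m)) (Hspan : \rank Phi = n) (c : F) :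
  [<-> Phi *m gdagger p l Phi = c%:M ;
       let G := gdagger p l Phi *m Phi in G *m G = c *: G ;
       forall x y : 'cV[F]_n,
         ginner p l (gdagger p (e - l) Phi *m x) (gdagger p l Phi *m y)
         = c * ginner p l x y].
Proof.
pose s := @sig F p l.
have Hcomp : forall x, @sig F p l (@sig F p (e - l) x) = x.
  move=> x; rewrite /sig /sigma -exprM -expnD subnK; last by rewrite (leq_trans Hl) // leq_subr.
  by rewrite -Hcard expf_card.
have Hmap : map_mx (@sig F p l) (map_mx (@sig F p (e - l)) Phi) = Phi.
  by apply/matrixP => i j; rewrite !mxE Hcomp.
set D := gdagger p l Phi.
have key : forall x y : 'cV[F]_n,
   ginner p l (gdagger p (e - l) Phi *m x) (D *m y)
   = ((map_mx s x)^T *m (Phi *m D) *m y) 0 0.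
  move=> x y; rewrite ginnerE gdaggerE (sigM _ Hp Hchar) mapT Hmap trmx_mul trmxK.
  by rewrite /D gdaggerE !mulmxA.
have keyc : forall x y : 'cV[F]_n, c * ginner p l x y
   = ((map_mx s x)^T *m c%:M *m y) 0 0.
  by move=> x y; rewrite ginnerE mul_mx_scalar -scalemxAl [RHS]mxE.
have P10 : Phi *m D = c%:M -> let G := D *m Phi in G *m G = c *: G.
  by move=> H /=; rewrite mulmxA -(mulmxA D) H mul_mx_scalar -scalemxAl.
have P01 : (let G := D *m Phi in G *m G = c *: G) -> Phi *m D = c%:M.
  move=> /= H.
  have rf : row_free Phi by rewrite /row_free Hspan.
  have rf2 : row_free (map_mx (@sig F p l) Phi) by rewrite /row_free (mxrank_map (Submission_sig__canonical__GRing_RMorphism l Hp Hchar)) Hspan.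
  have H1 : (D *m (Phi *m D - c%:M)) *m Phi = 0 *m Phi.
    rewrite mul0mx mulmxBr mulmxBl !mulmxA -[D *m Phi *m D *m Phi]mulmxA H.
    by rewrite mul_mx_scalar -scalemxAl subrr.
  have H2 := row_free_inj rf H1.
  have H3 : (Phi *m D - c%:M)^T *m map_mx (@sig F p l) Phi
          = 0 *m map_mx (@sig F p l) Phi.
    by rewrite mul0mx -[map_mx _ Phi]trmxK -trmx_mul -gdaggerE -/D H2 trmx0.
  have H4 := row_free_inj rf2 H3.
  by apply/eqP; rewrite -subr_eq0 -trmx_eq0 H4.
have P02 : Phi *m D = c%:M -> forall x y : 'cV[F]_n,
   ginner p l (gdagger p (e - l) Phi *m x) (D *m y) = c * ginner p l x y.
  by move=> H x y; rewrite key keyc H.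
have P20 : (forall x y : 'cV[F]_n,
   ginner p l (gdagger p (e - l) Phi *m x) (D *m y) = c * ginner p l x y) ->
   Phi *m D = c%:M.
  move=> H; apply/matrixP => i j.
  have := H (delta_mx i 0) (delta_mx j 0); rewrite key keyc.
  have -> : map_mx s (delta_mx i 0 : 'cV[F]_n) = delta_mx i 0.
    apply/matrixP => a b; rewrite !mxE; case: (_ && _) => /=; rewrite /s /sig /sigma ?expr1n // expr0n expn_eq0 (gtn_eqF (prime_gt0 Hp)) //.
  have dE : forall A : 'M[F]_n, ((delta_mx i ord0 : 'cV[F]_n)^T *m A *m (delta_mx j ord0 : 'cV[F]_n)) ord0 ord0 = A i j.
    by move=> A; rewrite trmx_delta -rowE -colE !mxE.
  by rewrite !dE.
tfae.
- exact: P10.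
- by move/P01/P02.
- exact: P20.
Qed.
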